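(* Fix $\rho<1$. There exist a function $F:\mathbb{N}\to\mathbb{N}$ and constants $C,c>0$ such that, for $G=G(\{h_i,n_i\})$ with $n_i=h_i^{15}$ and $h_i\geq F(n_{i-1}h_{i-1}^2)$ for all $i\geq1$, simple random walk on $G$ started at $0$ satisfies, for all $i\geq1$ and $k\geq1$, $$\mathbb{P}_0\big(\tau_0^{(\lceil Ckh_i\rceil)}<kh_in_i\big)\leq Ce^{-ck}.$$
   Context: Construction of $G(\{h_i,n_i\})$: let $(h_i)_{i\geq0},(n_i)_{i\geq0}$ be increasing sequences of positive integers; let $(E_i)_{i\geq1}$ be $3$-regular graphs with $|E_i|=n_i$ whose transition matrices have all eigenvalues other than $1$ of absolute value at most $\rho$, and $v_i\in E_i$ arbitrary. $G$ consists of the half-line $\mathbb{N}=\{0,1,\ldots\}$ with edges between consecutive integers, together with each $E_i$ attached by a single edge between $v_i$ and the integer vertex $h_i$. The $m$-th return time to $0$ is defined by $\tau_0^{(0)}=0$ and $\tau_0^{(m)}=\min\{t>\tau_0^{(m-1)}:X_t=0\}$ for $m\geq1$. *)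

(* Defs.v *)
From Stdlib Require Import Reals Lra Lia List ZArith.
Import ListNotations.
Open Scope R_scope.

(** Vertices of G({h_i,n_i}): [inl j] is the integer vertex j of the half-line;
    [inr (i, x)] is vertex x (0 <= x < n_i) of the expander E_i (i >= 1). *)
Definition Vtx := (nat + (nat * nat))%type.

Definition sumR (l : list R) : R := fold_right Rplus 0 l.

(** The graph E_i is given by a boolean adjacency [adj i : nat -> nat -> bool]
    on the vertex set {0,...,n_i - 1}. *)

Definition simple_3_regular (N : nat) (a : nat -> nat -> bool) : Prop :=
  (forall x y, (x < N)%nat -> (y < N)%nat -> a x y = a y x) /\
  (forall x, (x < N)%nat -> a x x = false) /\
  (forall x, (x < N)%nat -> length (filter (a x) (seq 0 N)) = 3%nat).

Definition trans3 (a : nat -> nat -> bool) (x y : nat) : R :=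
  if a x y then / 3 else 0.

Definition is_eigenpair (N : nat) (a : nat -> nat -> bool) (lam : R) (f : nat -> R) : Prop :=
  (exists x, (x < N)%nat /\ f x <> 0) /\
  forall x, (x < N)%nat ->
    sumR (map (fun y => trans3 a x y * f y) (seq 0 N)) = lam * f x.

(** All eigenvalues (counted with multiplicity) other than the trivial eigenvalue 1
    have absolute value at most rho: the eigenvalue 1 is simple (its eigenspace is the
    constants) and every other eigenvalue lam satisfies |lam| <= rho.  (The matrix is
    symmetric, so all eigenvalues are real and algebraic = geometric multiplicity.) *)
Definition spectral_bound (rho : R) (N : nat) (a : nat -> nat -> bool) : Prop :=
  forall lam f, is_eigenpair N a lam f ->
    (lam = 1 -> forall x y, (x < N)%nat -> (y < N)%nat -> f x = f y) /\
    (lam <> 1 -> Rabs lam <= rho).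

(** The integer vertex j is joined to j-1 (if j>0),
    j+1 and to v_i for every i >= 1 with h_i = j (such i satisfy i < j since h is
    strictly increasing with h_0 >= 1). *)
Definition nbrs (h n v : nat -> nat) (adj : nat -> nat -> nat -> bool) (u : Vtx) : list Vtx :=
  match u with
  | inl j =>
      (match j with O => [] | S j' => [inl j'] end) ++ [inl (S j)] ++
      map (fun i => inr (i, v i)) (filter (fun i => Nat.eqb (h i) j) (seq 1 j))
  | inr (i, x) =>
      map (fun y => inr (i, y)) (filter (adj i x) (seq 0 (n i))) ++
      (if Nat.eqb x (v i) then [inl (h i)] else [])
  end.

Definition is_origin (u : Vtx) : bool :=
  match u with inl O => true | _ => false end.

(** [visits_prob nb t u m] = probability that simple random walk (neighbour lists [nb])
    started at u visits the origin 0 at least m times during the time steps 1,...,t. *)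
Fixpoint visits_prob (nb : Vtx -> list Vtx) (t : nat) (u : Vtx) (m : nat) {struct t} : R :=
  match m with
  | O => 1
  | S m' =>
      match t with
      | O => 0
      | S t' =>
          let l := nb u in
          sumR (map (fun w => / INR (length l) *
                      (if is_origin w then visits_prob nb t' w m'
                       else visits_prob nb t' w (S m'))) l)
      end
  end.

(** P_0(tau_0^(M) < T) for T >= 1: the M-th return to 0 happens at a time <= T-1,
    i.e. at least M visits to 0 during times 1..T-1. *)
Definition return_before (nb : Vtx -> list Vtx) (M T : nat) : R :=
  visits_prob nb (T - 1) (inl O) M.

Definition Rceil (x : R) : Z := (- Int_part (- x))%Z.

(* Main.v *)
Require Import Defs.
From Stdlib Require Import Reals List ZArith Lra Lia ClassicalEpsilon FunctionalExtensionality Classical.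
From HB Require Import structures.
From mathcomp Require ssreflect ssrfun ssrbool eqtype ssrnat seq choice fintype bigop ssralg matrix.
Module RF.
Import ssreflect ssrfun ssrbool eqtype ssrnat seq choice fintype bigop ssralg matrix.
Definition Req_bool (x y : R) : bool := if Req_EM_T x y then true else false.
Lemma Req_boolP : Equality.axiom Req_bool.
Proof. move=> x y; rewrite /Req_bool; case: Req_EM_T => H; [by constructor|by constructor]. Qed.
HB.instance Definition _ := hasDecEq.Build R Req_boolP.
Definition findR (P : pred R) (n : nat) : option R :=
  match excluded_middle_informative (exists x, P x) with
  | left H => Some (proj1_sig (constructive_indefinite_description _ H))
  | right _ => None end.
Lemma findR_correct P n x : findR P n = Some x -> P x.
Proof. rewrite /findR; case: excluded_middle_informative => // H [<-].
exact: (proj2_sig (constructive_indefinite_description _ H)). Qed.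
Lemma findR_complete (P : pred R) : (exists x, P x) -> exists n, findR P n.
Proof. move=> H; exists 0%N; rewrite /findR; case: excluded_middle_informative => //. Qed.
Lemma findR_ext (P Q : pred R) : P =1 Q -> findR P =1 findR Q.
Proof. move=> H; have -> : P = Q by apply: functional_extensionality. by []. Qed.
HB.instance Definition _ := hasChoice.Build R findR_correct findR_complete findR_ext.
Lemma RaddA : associative Rplus. Proof. move=> *; by rewrite Rplus_assoc. Qed.
Lemma RaddC : commutative Rplus. Proof. move=> *; by rewrite Rplus_comm. Qed.
Lemma Radd0 : left_id R0 Rplus. Proof. move=> *; by rewrite Rplus_0_l. Qed.
Lemma RaddN : left_inverse R0 Ropp Rplus. Proof. move=> *; by rewrite Rplus_opp_l. Qed.
HB.instance Definition _ := GRing.isZmodule.Build R RaddA RaddC Radd0 RaddN.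
Lemma RmulA : associative Rmult. Proof. move=> *; by rewrite Rmult_assoc. Qed.
Lemma RmulC : commutative Rmult. Proof. move=> *; by rewrite Rmult_comm. Qed.
Lemma Rmul1 : left_id R1 Rmult. Proof. move=> *; by rewrite Rmult_1_l. Qed.
Lemma RmulD : left_distributive Rmult Rplus. Proof. move=> *; by rewrite Rmult_plus_distr_r. Qed.
Lemma R1n0 : R1 != R0. Proof. apply/eqP; exact R1_neq_R0. Qed.
HB.instance Definition _ := GRing.Zmodule_isComNzRing.Build R RmulA RmulC Rmul1 RmulD R1n0.
Definition Rinvx (x : R) := if Req_EM_T x R0 then R0 else Rinv x.
Lemma RmulV (x : R) : x != R0 -> (Rmult (Rinvx x) x = R1).
Proof. move/eqP=> H; unfold Rinvx; destruct (Req_EM_T x R0) as [E|E]; [by case: H|exact: Rinv_l]. Qed.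
Lemma Rinv0x : Rinvx R0 = R0.
Proof. unfold Rinvx; destruct (Req_EM_T R0 R0); [reflexivity|by case: n]. Qed.
HB.instance Definition _ := GRing.ComNzRing_isField.Build R RmulV Rinv0x.
Local Open Scope ring_scope.
Fixpoint sm (n : nat) (f : nat -> R) : R := match n with O => R0 | S n => Rplus (sm n f) (f n) end.
Lemma sm_big n (f : nat -> R) : \sum_(i < n) f (nat_of_ord i) = sm n f.
Proof.
elim: n => [|n IH]; first by rewrite big_ord0.
by rewrite big_ord_recr /= IH.
Qed.
Definition ext {N} (M : 'M[R]_N) (x y : nat) : R :=
  match insub x, insub y with Some i, Some j => M i j | _, _ => R0 end.
Lemma extE {N} (M : 'M[R]_N) (i j : 'I_N) : ext M i j = M i j.
Proof. by rewrite /ext !valK. Qed.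
Lemma LA (N : nat) (L : nat -> nat -> R) :
 (exists g : nat -> R, (exists x, (x < N)%N /\ g x <> R0) /\
    forall x, (x < N)%N -> sm N (fun y => Rmult (L x y) (g y)) = R0)
 \/ (exists Mi : nat -> nat -> R, forall x z, (x < N)%N -> (z < N)%N ->
      sm N (fun y => Rmult (Mi x y) (L y z)) = if Nat.eqb x z then R1 else R0).
Proof.
pose A := \matrix_(i < N, j < N) L i j.
case: (boolP (\det A == 0)) => Hd.
- left.
  have Hd' : \det A^T == 0 by rewrite det_tr.
  move/det0P: Hd' => [v Hv0 Hv].
  exists (fun y => oapp (fun i : 'I_N => v ord0 i) R0 (insub y)); split.
  + case: (boolP [exists i : 'I_N, v ord0 i != 0]).
    * move/existsP=> [i Hi]; exists (nat_of_ord i); split; first exact: ltn_ord.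
      by rewrite valK /=; apply/eqP.
    * move=> Hn; case/negP: Hv0; apply/eqP/matrixP=> a b.
      rewrite ord1 mxE; apply/eqP; apply: contraR Hn => Hb.
      by apply/existsP; exists b.
  + move=> x Hx; rewrite -sm_big.
    transitivity ((v *m A^T) ord0 (Ordinal Hx)); last by rewrite Hv mxE.
    rewrite mxE; apply: eq_bigr => i _; rewrite valK /= !mxE; exact: Rmult_comm.
- right.
  have HA : A \in unitmx by rewrite unitmxE GRing.unitfE.
  exists (ext (invmx A)) => x z Hx Hz.
  rewrite -sm_big.
  have := congr1 (fun M : 'M[R]_N => M (Ordinal Hx) (Ordinal Hz)) (mulVmx HA).
  rewrite !mxE => E.
  transitivity (\sum_(j < N) invmx A (Ordinal Hx) j * A j (Ordinal Hz)).
    apply: eq_bigr => j _; rewrite !mxE /=.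
    by rewrite -(extE (invmx A) (Ordinal Hx) j).
  rewrite E /=; case: (Nat.eqb_spec x z) => H.
    have -> : (Ordinal Hx == Ordinal Hz) = true by apply/eqP; apply: val_inj.
    by [].
  have -> : (Ordinal Hx == Ordinal Hz) = false by apply/eqP => - [].
  by [].
Qed.
Lemma LA2 (N : nat) (L : nat -> nat -> R) :
 (exists g : nat -> R, (exists x, (x < N)%coq_nat /\ g x <> R0) /\
    forall x, (x < N)%coq_nat -> sm N (fun y => Rmult (L x y) (g y)) = R0)
 \/ (exists Mi : nat -> nat -> R, forall x z, (x < N)%coq_nat -> (z < N)%coq_nat ->
      sm N (fun y => Rmult (Mi x y) (L y z)) = if Nat.eqb x z then R1 else R0).
Proof.
case: (LA N L) => [[g [[x [Hx1 Hx2]] Hg]]|[Mi HM]].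
- left; exists g; split; first by exists x; split => //; apply/ltP.
  by move=> y /ltP; apply: Hg.
- right; exists Mi => x z /ltP Hx /ltP Hz; exact: HM.
Qed.
End RF.


Import ListNotations.
Open Scope R_scope.

Notation sm := RF.sm.

Lemma sm_S n f : sm (S n) f = sm n f + f n.
Proof. reflexivity. Qed.
Lemma sm_0 f : sm 0 f = 0.
Proof. reflexivity. Qed.

Lemma sm_ext n f g : (forall x, (x < n)%nat -> f x = g x) -> sm n f = sm n g.
Proof.
  induction n; intros H; simpl; [reflexivity|].
  rewrite IHn by (intros; apply H; lia). rewrite H by lia. reflexivity.
Qed.

Lemma sm_plus n f g : sm n (fun x => f x + g x) = sm n f + sm n g.
Proof. induction n; simpl; [ring|rewrite IHn; ring]. Qed.

Lemma sm_minus n f g : sm n (fun x => f x - g x) = sm n f - sm n g.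
Proof. induction n; simpl; [ring|rewrite IHn; ring]. Qed.

Lemma sm_scal n c f : sm n (fun x => c * f x) = c * sm n f.
Proof. induction n; simpl; [ring|rewrite IHn; ring]. Qed.

Lemma sm_scal_r n c f : sm n (fun x => f x * c) = sm n f * c.
Proof. induction n; simpl; [ring|rewrite IHn; ring]. Qed.

Lemma sm_const n c : sm n (fun _ => c) = INR n * c.
Proof. induction n; simpl sm; [simpl; ring|rewrite IHn, S_INR; ring]. Qed.

Lemma sm_le n f g : (forall x, (x < n)%nat -> f x <= g x) -> sm n f <= sm n g.
Proof.
  induction n; intros H; simpl; [lra|].
  apply Rplus_le_compat; [apply IHn; intros; apply H; lia|apply H; lia].
Qed.

Lemma sm_nonneg n f : (forall x, (x < n)%nat -> 0 <= f x) -> 0 <= sm n f.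
Proof. intros H. replace 0 with (sm n (fun _ => 0)). apply sm_le; auto.
  rewrite sm_const; ring. Qed.

Lemma sm_swap n m (F : nat -> nat -> R) :
  sm n (fun x => sm m (fun y => F x y)) = sm m (fun y => sm n (fun x => F x y)).
Proof.
  induction n; simpl.
  - rewrite sm_const. simpl; ring.
  - rewrite IHn. rewrite <- sm_plus. reflexivity.
Qed.

Lemma sm_single n v c : (v < n)%nat -> sm n (fun y => if Nat.eqb y v then c else 0) = c.
Proof.
  induction n; intros H; [lia|]. simpl.
  destruct (Nat.eqb_spec n v).
  - subst. rewrite (sm_ext _ _ (fun _ => 0)). rewrite sm_const; ring.
    intros x Hx. destruct (Nat.eqb_spec x v); [lia|reflexivity].
  - rewrite IHn by lia. ring.
Qed.

Lemma sm_term_le n f x : (forall y, (y < n)%nat -> 0 <= f y) -> (x < n)%nat -> f x <= sm n f.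
Proof.
  induction n; intros H Hx; [lia|]. simpl.
  destruct (Nat.eq_dec x n).
  - subst. assert (0 <= sm n f) by (apply sm_nonneg; intros; apply H; lia). lra.
  - assert (f x <= sm n f) by (apply IHn; [intros; apply H; lia|lia]).
    assert (0 <= f n) by (apply H; lia). lra.
Qed.

Lemma sm_zero_all n f : (forall y, (y < n)%nat -> 0 <= f y) -> sm n f = 0 ->
  forall y, (y < n)%nat -> f y = 0.
Proof.
  intros H H0 y Hy. pose proof (sm_term_le n f y H Hy). pose proof (H y Hy). lra.
Qed.

Lemma sm_telescope n (a : nat -> R) : sm n (fun t => a t - a (S t)) = a 0%nat - a n.
Proof. induction n; simpl; [ring|rewrite IHn; ring]. Qed.

Lemma sumR_app l1 l2 : sumR (l1 ++ l2) = sumR l1 + sumR l2.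
Proof. induction l1; simpl; [ring|rewrite IHl1; ring]. Qed.

Lemma sumR_seq n f : sumR (map f (seq 0 n)) = sm n f.
Proof.
  induction n; [reflexivity|]. rewrite seq_S, map_app, sumR_app, IHn. simpl. ring.
Qed.

Lemma sumR_scal (A : Type) (l : list A) c (f : A -> R) :
  sumR (map (fun w => c * f w) l) = c * sumR (map f l).
Proof. induction l; simpl; [ring|rewrite IHl; ring]. Qed.

Lemma sumR_le (A : Type) (l : list A) (f g : A -> R) :
  (forall w, In w l -> f w <= g w) -> sumR (map f l) <= sumR (map g l).
Proof.
  induction l; simpl; intros H; [lra|].
  apply Rplus_le_compat; [apply H; auto|apply IHl; intros; apply H; auto].
Qed.

Lemma sumR_const (A : Type) (l : list A) (f : A -> R) c :
  (forall w, In w l -> f w = c) -> sumR (map f l) = INR (length l) * c.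
Proof.
  induction l; simpl; intros H; [ring|]. rewrite IHl by (intros; apply H; auto).
  rewrite H by auto. destruct (length l); simpl; ring.
Qed.

Lemma sumR_filter (l : list nat) (p : nat -> bool) (g : nat -> R) :
  sumR (map g (filter p l)) = sumR (map (fun x => if p x then g x else 0) l).
Proof.
  induction l; simpl; [reflexivity|]. destruct (p a); simpl; rewrite IHl; ring.
Qed.

Lemma sumR_map_map (A B : Type) (l : list A) (f : A -> B) (g : B -> R) :
  sumR (map g (map f l)) = sumR (map (fun x => g (f x)) l).
Proof. rewrite map_map. reflexivity. Qed.

Lemma length_filter_R (l : list nat) (p : nat -> bool) :
  INR (length (filter p l)) = sumR (map (fun x => if p x then 1 else 0) l).
Proof.
  induction l; [reflexivity|].
  change (sumR (map (fun x => if p x then 1 else 0) (a :: l))) with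
    ((if p a then 1 else 0) + sumR (map (fun x => if p x then 1 else 0) l)).
  rewrite <- IHl. simpl filter. destruct (p a); [|ring]. change (length (a :: filter p l)) with (S (length (filter p l))).
  rewrite S_INR. ring.
Qed.

Lemma quad_disc a b c : 0 <= c -> (forall t, 0 <= a + 2 * b * t + c * t * t) -> b * b <= a * c.
Proof.
  intros Hc H.
  destruct (Rle_lt_or_eq_dec 0 c Hc) as [Hc'|Hc'].
  - specialize (H (- b / c)).
    assert (E : a + 2 * b * (- b / c) + c * (- b / c) * (- b / c) = a - b * b / c)
      by (field; lra).
    rewrite E in H.
    assert (0 <= (a - b * b / c) * c) by (apply Rmult_le_pos; lra).
    assert (E2 : (a - b * b / c) * c = a * c - b * b) by (field; lra).
    lra.
  - subst c. destruct (Req_dec b 0) as [Hb|Hb].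
    + subst b. lra.
    + exfalso. specialize (H (- (a + 1) / (2 * b))).
      assert (E : a + 2 * b * (- (a + 1) / (2 * b)) + 0 * (- (a + 1) / (2 * b)) * (- (a + 1) / (2 * b)) = -1)
        by (field; lra).
      lra.
Qed.

Lemma sm_CS n (f g : nat -> R) :
  sm n (fun x => f x * g x) * sm n (fun x => f x * g x) <=
  sm n (fun x => f x * f x) * sm n (fun x => g x * g x).
Proof.
  apply quad_disc.
  - apply sm_nonneg; intros x _. pose proof (Rle_0_sqr (g x)). unfold Rsqr in *. lra.
  - intros t.
    assert (E : sm n (fun x => f x * f x) + 2 * sm n (fun x => f x * g x) * t +
                sm n (fun x => g x * g x) * t * t = sm n (fun x => (f x + t * g x) * (f x + t * g x))).
    { replace (2 * sm n (fun x => f x * g x) * t) with ((2 * t) * sm n (fun x => f x * g x)) by ring.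
      replace (sm n (fun x => g x * g x) * t * t) with ((t * t) * sm n (fun x => g x * g x)) by ring.
      rewrite <- !sm_scal, <- !sm_plus. apply sm_ext. intros; ring. }
    rewrite E. apply sm_nonneg; intros x _. pose proof (Rle_0_sqr (f x + t * g x)). unfold Rsqr in *. lra.
Qed.


Import ListNotations.
Open Scope R_scope.

Definition Pop (N : nat) (a : nat -> nat -> bool) (f : nat -> R) (x : nat) : R :=
  sm N (fun y => trans3 a x y * f y).
Definition nrm (N : nat) (f : nat -> R) : R := sm N (fun x => f x * f x).
Definition ip (N : nat) (f g : nat -> R) : R := sm N (fun x => f x * g x).

Lemma trans3_nonneg a x y : 0 <= trans3 a x y.
Proof. unfold trans3. destruct (a x y); lra. Qed.

Lemma nrm_nonneg N f : 0 <= nrm N f.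
Proof. apply sm_nonneg. intros x _. pose proof (Rle_0_sqr (f x)). unfold Rsqr in *. lra. Qed.

Lemma nrm_zero N f : nrm N f = 0 -> forall x, (x < N)%nat -> f x = 0.
Proof.
  intros H x Hx. pose proof (sm_zero_all N (fun x => f x * f x)) as Z.
  assert (f x * f x = 0).
  { apply Z; auto. intros y _. pose proof (Rle_0_sqr (f y)). unfold Rsqr in *. lra. }
  apply Rmult_integral in H0. tauto.
Qed.

Section Trap.
Variable N : nat.
Variable a : nat -> nat -> bool.
Hypothesis Hreg : simple_3_regular N a.

Lemma row_sum x : (x < N)%nat -> sm N (fun y => trans3 a x y) = 1.
Proof.
  intros Hx. destruct Hreg as [_ [_ H3]].
  pose proof (H3 x Hx) as L. rewrite <- sumR_seq.
  pose proof (length_filter_R (seq 0 N) (a x)) as E. rewrite L in E.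
  replace (sumR (map (fun y => trans3 a x y) (seq 0 N))) with
    (/3 * sumR (map (fun y => if a x y then 1 else 0) (seq 0 N))).
  - rewrite <- E. simpl. field.
  - rewrite <- sumR_scal. f_equal. apply map_ext. intros y. unfold trans3. destruct (a x y); ring.
Qed.

Lemma trans3_sym x y : (x < N)%nat -> (y < N)%nat -> trans3 a x y = trans3 a y x.
Proof. intros Hx Hy. destruct Hreg as [Hs _]. unfold trans3. rewrite Hs by auto. reflexivity. Qed.

Lemma col_sum y : (y < N)%nat -> sm N (fun x => trans3 a x y) = 1.
Proof.
  intros Hy. rewrite <- (row_sum y Hy). apply sm_ext. intros x Hx. apply trans3_sym; auto.
Qed.

Lemma Pop_ext f g x : (forall y, (y < N)%nat -> f y = g y) -> Pop N a f x = Pop N a g x.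
Proof. intros H. unfold Pop. apply sm_ext. intros y Hy. rewrite H; auto. Qed.

Lemma Pop_lin f g c x : Pop N a (fun y => f y + c * g y) x = Pop N a f x + c * Pop N a g x.
Proof. unfold Pop. rewrite <- sm_scal, <- sm_plus. apply sm_ext. intros; ring. Qed.

Lemma Pop_scal f c x : Pop N a (fun y => c * f y) x = c * Pop N a f x.
Proof. unfold Pop. rewrite <- sm_scal. apply sm_ext. intros; ring. Qed.

Lemma Pop_const c x : (x < N)%nat -> Pop N a (fun _ => c) x = c.
Proof. intros Hx. unfold Pop. rewrite sm_scal_r, row_sum by auto. ring. Qed.

Lemma Pop_nonneg f x : (forall y, (y < N)%nat -> 0 <= f y) -> 0 <= Pop N a f x.
Proof. intros H. unfold Pop. apply sm_nonneg. intros y Hy. apply Rmult_le_pos; auto. apply trans3_nonneg. Qed.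

Lemma Pop_sum f : sm N (Pop N a f) = sm N f.
Proof.
  unfold Pop. rewrite sm_swap. apply sm_ext. intros y Hy.
  rewrite sm_scal_r, col_sum by auto. ring.
Qed.

Lemma Pop_selfadj f g : ip N g (Pop N a f) = ip N (Pop N a g) f.
Proof.
  unfold ip, Pop.
  transitivity (sm N (fun x => sm N (fun y => g x * trans3 a x y * f y))).
  { apply sm_ext. intros x Hx. rewrite <- sm_scal. apply sm_ext. intros; ring. }
  rewrite sm_swap.
  apply sm_ext. intros y Hy. rewrite <- sm_scal_r. apply sm_ext. intros x Hx.
  rewrite trans3_sym by auto. ring.
Qed.

Lemma Pop_nrm f : nrm N (Pop N a f) <= nrm N f.
Proof.
  unfold nrm.
  apply Rle_trans with (sm N (fun x => sm N (fun y => trans3 a x y * (f y * f y)))).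
  - apply sm_le. intros x Hx. unfold Pop.
    set (m := sm N (fun y => trans3 a x y * f y)).
    assert (H : 0 <= sm N (fun y => trans3 a x y * ((f y - m) * (f y - m)))).
    { apply sm_nonneg. intros y _. apply Rmult_le_pos. apply trans3_nonneg.
      pose proof (Rle_0_sqr (f y - m)). unfold Rsqr in *. lra. }
    assert (E : sm N (fun y => trans3 a x y * ((f y - m) * (f y - m))) =
                sm N (fun y => trans3 a x y * (f y * f y)) - 2 * m * m + m * m * sm N (fun y => trans3 a x y)).
    { rewrite (sm_ext _ _ (fun y => (trans3 a x y * (f y * f y) + (-2*m) * (trans3 a x y * f y)) + (m*m) * trans3 a x y))
        by (intros; ring).
      rewrite !sm_plus, !sm_scal. fold m. change (sm N (trans3 a x)) with (sm N (fun y => trans3 a x y)). ring. }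
    rewrite row_sum in E by auto. lra.
  - rewrite sm_swap. apply sm_le. intros y Hy. rewrite sm_scal_r, col_sum by auto. lra.
Qed.

End Trap.


Import ListNotations.
Open Scope R_scope.

Lemma ip_sym N f g : ip N f g = ip N g f.
Proof. unfold ip. apply sm_ext. intros; ring. Qed.

Lemma nrm_comb N f g t : nrm N (fun x => f x + t * g x) = nrm N f + 2 * t * ip N f g + t * t * nrm N g.
Proof.
  unfold nrm, ip.
  rewrite (sm_ext _ _ (fun x => (f x * f x + (2 * t) * (f x * g x)) + (t * t) * (g x * g x))) by (intros; ring).
  rewrite !sm_plus, !sm_scal. ring.
Qed.

Lemma div_le_iff a b c : 0 < b -> (a / b <= c <-> a <= c * b).
Proof.
  intros Hb. split; intros H.
  - apply Rmult_le_compat_r with (r := b) in H; [|lra]. unfold Rdiv in H.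
    rewrite Rmult_assoc, Rinv_l, Rmult_1_r in H by lra. auto.
  - apply Rmult_le_reg_r with b; auto. unfold Rdiv. rewrite Rmult_assoc, Rinv_l, Rmult_1_r by lra. auto.
Qed.

Lemma lt_div_iff a b c : 0 < b -> (c < a / b <-> c * b < a).
Proof.
  intros Hb. split; intros H.
  - destruct (Rle_lt_dec a (c * b)) as [H'|H']; auto. apply div_le_iff in H'; auto. lra.
  - destruct (Rle_lt_dec (a / b) c) as [H'|H']; auto. apply div_le_iff in H'; auto. lra.
Qed.

Section Contr.
Variable N : nat.
Variable a : nat -> nat -> bool.
Hypothesis Hreg : simple_3_regular N a.
Variable rho : R.
Hypothesis Hrho : 0 < rho.
Hypothesis Hspec : spectral_bound rho N a.

Let P := Pop N a.
Let Q f := P (P f).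

Lemma Pzero f : (forall x, (x < N)%nat -> f x = 0) -> forall x, P f x = 0.
Proof.
  intros H x. unfold P, Pop. rewrite (sm_ext _ _ (fun _ => 0)). rewrite sm_const; ring.
  intros y Hy. rewrite H; auto; ring.
Qed.

Lemma nrm_pos_or f : 0 < nrm N f \/ (forall x, (x < N)%nat -> f x = 0).
Proof.
  destruct (Rle_lt_or_eq_dec _ _ (nrm_nonneg N f)) as [H|H]; [left; auto|right].
  apply nrm_zero; auto.
Qed.

Lemma ip_PP f g : ip N (P f) (P g) = ip N (Q f) g.
Proof. unfold Q, P. rewrite Pop_selfadj by auto. reflexivity. Qed.

Lemma Q_sum f : sm N (Q f) = sm N f.
Proof. unfold Q, P. rewrite !Pop_sum by auto. reflexivity. Qed.

Lemma contraction_sq : forall f, sm N f = 0 -> nrm N (P f) <= rho ^ 2 * nrm N f.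
Proof.
  intros f0 Hf0.
  destruct (Rle_lt_dec (nrm N (P f0)) (rho ^ 2 * nrm N f0)) as [|Hlt]; [assumption|exfalso].
  assert (Hn0 : 0 < nrm N f0).
  { destruct (nrm_pos_or f0) as [|Hz]; auto.
    assert (nrm N f0 = 0) by (unfold nrm; rewrite (sm_ext _ _ (fun _ => 0)); [rewrite sm_const; ring|intros; rewrite Hz; auto; ring]).
    assert (nrm N (P f0) = 0) by (unfold nrm; rewrite (sm_ext _ _ (fun _ => 0)); [rewrite sm_const; ring|intros; rewrite Pzero; auto; ring]).
    rewrite H, H0 in Hlt. lra. }
  set (S r := exists f, sm N f = 0 /\ 0 < nrm N f /\ r = nrm N (P f) / nrm N f).
  assert (HSb : bound S).
  { exists 1. intros r [f [_ [Hp ->]]]. unfold P. pose proof (Pop_nrm N a Hreg f).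
    apply div_le_iff; auto. lra. }
  assert (HSne : exists r, S r) by (exists (nrm N (P f0) / nrm N f0); exists f0; auto).
  destruct (completeness S HSb HSne) as [mu [Hub Hleast]].
  assert (Hmu0 : nrm N (P f0) / nrm N f0 <= mu) by (apply Hub; exists f0; auto).
  assert (Hmurho : rho ^ 2 < mu).
  { apply Rlt_le_trans with (nrm N (P f0) / nrm N f0); auto. apply lt_div_iff; auto. }
  assert (Hrho2 : 0 < rho ^ 2) by (apply pow_lt; auto).
  assert (Hmup : 0 < mu) by lra.
  assert (Hup : forall g, sm N g = 0 -> nrm N (P g) <= mu * nrm N g).
  { intros g Hg. destruct (nrm_pos_or g) as [Hp|Hz].
    { assert (Hr : nrm N (P g) / nrm N g <= mu) by (apply Hub; exists g; auto).
      apply (proj1 (div_le_iff _ _ _ Hp)) in Hr. exact Hr. }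
    assert (HP : nrm N (P g) = 0) by (unfold nrm; rewrite (sm_ext _ _ (fun _ => 0)); [rewrite sm_const; ring|intros; rewrite Pzero; auto; ring]).
    rewrite HP. apply Rmult_le_pos; [lra|apply nrm_nonneg]. }
  assert (Happrox : forall eps, 0 < eps -> exists f, sm N f = 0 /\ 0 < nrm N f /\ (mu - eps) * nrm N f <= nrm N (P f)).
  { intros eps He. apply NNPP. intros Hno.
    assert (is_upper_bound S (mu - eps)).
    { intros r [f [Hf [Hp ->]]].
      destruct (Rle_lt_dec (nrm N (P f) / nrm N f) (mu - eps)) as [|Hgt]; auto.
      exfalso. apply Hno. exists f. split; auto. split; auto.
      apply lt_div_iff in Hgt; auto. lra. }
    pose proof (Hleast _ H). lra. }
  set (L f x := mu * f x - Q f x).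
  assert (HLsum : forall f, sm N f = 0 -> sm N (L f) = 0).
  { intros f Hf. unfold L. rewrite sm_minus, sm_scal, Q_sum, Hf. ring. }
  assert (HL : forall eps f, 0 < eps -> sm N f = 0 -> (mu - eps) * nrm N f <= nrm N (P f) ->
                 nrm N (L f) <= eps * mu * nrm N f).
  { intros eps f He Hf Happ.
    set (g := L f). assert (Hg : sm N g = 0) by (apply HLsum; auto).
    set (X := nrm N g).
    assert (HX0 : 0 <= X) by apply nrm_nonneg.
    assert (Hquad : forall t, 0 <= (mu * nrm N f - nrm N (P f)) + 2 * (mu * ip N f g - ip N (P f) (P g)) * t
                                 + (mu * nrm N g - nrm N (P g)) * t * t).
    { intros t.
      assert (Hs : sm N (fun x => f x + t * g x) = 0) by (rewrite sm_plus, sm_scal, Hf, Hg; ring).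
      pose proof (Hup _ Hs) as Hu.
      rewrite nrm_comb in Hu.
      assert (EP : nrm N (P (fun x => f x + t * g x)) = nrm N (fun x => P f x + t * P g x)).
      { unfold nrm. apply sm_ext. intros x _. unfold P. rewrite Pop_lin. reflexivity. }
      rewrite EP, nrm_comb in Hu. nra. }
    assert (Hc : 0 <= mu * nrm N g - nrm N (P g)) by (pose proof (Hup g Hg); lra).
    pose proof (quad_disc _ _ _ Hc Hquad) as Hd.
    assert (Hb : mu * ip N f g - ip N (P f) (P g) = X).
    { rewrite ip_PP. unfold X, nrm, ip. rewrite <- sm_scal, <- sm_minus. apply sm_ext.
      intros x _. change (mu * (f x * g x) - Q f x * g x = (mu * f x - Q f x) * g x). ring. }
    rewrite Hb in Hd.
    assert (Ha0 : 0 <= mu * nrm N f - nrm N (P f)) by (pose proof (Hup f Hf); lra).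
    assert (Ha : mu * nrm N f - nrm N (P f) <= eps * nrm N f) by lra.
    assert (Hc' : mu * nrm N g - nrm N (P g) <= mu * X).
    { pose proof (nrm_nonneg N (P g)). unfold X. lra. }
    assert (Hfin : X * X <= (eps * nrm N f) * (mu * X)).
    { apply Rle_trans with ((mu * nrm N f - nrm N (P f)) * (mu * nrm N g - nrm N (P g))); auto.
      apply Rmult_le_compat; auto. }
    destruct (Rle_lt_or_eq_dec _ _ HX0) as [HXp|HX].
    - apply Rmult_le_reg_r with X; auto. nra.
    - rewrite <- HX. apply Rmult_le_pos; [apply Rmult_le_pos; lra|apply nrm_nonneg]. }
  assert (HNpos : (0 < N)%nat).
  { destruct N; [|lia]. unfold nrm in Hn0. simpl in Hn0. lra. }
  assert (HNR : 0 < INR N) by (apply lt_0_INR; auto).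
  set (Lm x y := (if Nat.eqb x y then mu else 0) - sm N (fun z => trans3 a x z * trans3 a z y) + 2 / INR N).
  assert (HQmat : forall g x, Q g x = sm N (fun y => sm N (fun z => trans3 a x z * trans3 a z y) * g y)).
  { intros g x. unfold Q, P, Pop.
    transitivity (sm N (fun z => sm N (fun y => trans3 a x z * (trans3 a z y * g y)))).
    { apply sm_ext. intros z _. rewrite sm_scal. reflexivity. }
    rewrite sm_swap. apply sm_ext. intros y _. rewrite <- sm_scal_r. apply sm_ext. intros; ring. }
  assert (HLapp : forall g x, (x < N)%nat -> sm N (fun y => Lm x y * g y) = mu * g x - Q g x + 2 / INR N * sm N g).
  { intros g x Hx. unfold Lm.
    rewrite (sm_ext _ _ (fun y => ((if Nat.eqb y x then mu * g x else 0) - sm N (fun z => trans3 a x z * trans3 a z y) * g y) + 2 / INR N * g y)).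
    2: { intros y _. destruct (Nat.eqb_spec x y), (Nat.eqb_spec y x); subst; try lia; ring. }
    rewrite sm_plus, sm_minus, sm_single, sm_scal by auto. rewrite HQmat. ring. }
  destruct (RF.LA2 N Lm) as [[g [[x0 [Hx0 Hgx0]] Hker]] | [Mi HMi]].
  - assert (Hker' : forall x, (x < N)%nat -> mu * g x - Q g x + 2 / INR N * sm N g = 0).
    { intros x Hx. rewrite <- HLapp by auto. apply Hker; auto. }
    assert (Hgs : sm N g = 0).
    { assert (E : sm N (fun x => mu * g x - Q g x + 2 / INR N * sm N g) = 0).
      { rewrite (sm_ext _ _ (fun _ => 0)). rewrite sm_const; ring. intros; apply Hker'; auto. }
      rewrite sm_plus, sm_minus, sm_scal, Q_sum, sm_const in E.
      replace (INR N * (2 / INR N * sm N g)) with (2 * sm N g) in E by (field; lra).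
      assert ((mu + 1) * sm N g = 0) by lra.
      apply Rmult_integral in H. destruct H; [lra|auto]. }
    assert (Heig : forall x, (x < N)%nat -> Q g x = mu * g x).
    { intros x Hx. pose proof (Hker' x Hx). rewrite Hgs in H. lra. }
    set (s := sqrt mu).
    assert (Hss : s * s = mu) by (apply sqrt_sqrt; lra).
    assert (Hsr : rho < s).
    { unfold s. rewrite <- (sqrt_pow2 rho) by lra. apply sqrt_lt_1_alt. split; [lra|auto]. }
    set (hv x := P g x + s * g x).
    destruct (classic (exists x, (x < N)%nat /\ hv x <> 0)) as [[x1 [Hx1 Hh1]]|Hno].
    + assert (Hev : forall x, (x < N)%nat -> sumR (map (fun y => trans3 a x y * hv y) (seq 0 N)) = s * hv x).
      { intros x Hx. rewrite sumR_seq. change (Pop N a hv x = s * hv x). unfold hv.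
        rewrite Pop_lin. change (Pop N a (P g) x) with (Q g x). rewrite Heig by auto.
        rewrite <- Hss. unfold P. ring. }
      destruct (Hspec s hv (conj (ex_intro _ x1 (conj Hx1 Hh1)) Hev)) as [H1 H2].
      destruct (Req_dec s 1) as [Hs1|Hs1].
      * assert (Hsum : sm N hv = 0).
        { unfold hv. rewrite sm_plus, sm_scal. unfold P. rewrite Pop_sum, Hgs by auto. ring. }
        rewrite (sm_ext _ _ (fun _ => hv x1)) in Hsum by (intros; apply H1; auto).
        rewrite sm_const in Hsum. apply Rmult_integral in Hsum. destruct Hsum; lra.
      * pose proof (H2 Hs1). rewrite Rabs_right in H by lra. lra.
    + assert (Hev : forall x, (x < N)%nat -> sumR (map (fun y => trans3 a x y * g y) (seq 0 N)) = - s * g x).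
      { intros x Hx. rewrite sumR_seq. change (P g x = - s * g x).
        assert (hv x = 0) by (apply NNPP; intros Hc; apply Hno; exists x; auto).
        unfold hv in H. lra. }
      destruct (Hspec (- s) g (conj (ex_intro _ x0 (conj Hx0 Hgx0)) Hev)) as [H1 H2].
      assert (- s <> 1) by lra.
      pose proof (H2 H). rewrite Rabs_left in H0 by lra. lra.
  - set (K := sm N (fun x => nrm N (Mi x))).
    assert (HK : 0 <= K) by (apply sm_nonneg; intros; apply nrm_nonneg).
    set (eps := / (2 * (K * mu + 1))).
    assert (HKm : 0 <= K * mu) by (apply Rmult_le_pos; lra).
    assert (Heps : 0 < eps) by (unfold eps; apply Rinv_0_lt_compat; lra).
    destruct (Happrox eps Heps) as [f [Hf [Hfp Happ]]].
    pose proof (HL eps f Heps Hf Happ) as HLf.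
    assert (HLm : forall y, (y < N)%nat -> L f y = sm N (fun z => Lm y z * f z)).
    { intros y Hy. rewrite HLapp, Hf by auto. unfold L. ring. }
    assert (Hrep : forall x, (x < N)%nat -> f x = sm N (fun y => Mi x y * L f y)).
    { intros x Hx.
      transitivity (sm N (fun y => sm N (fun z => Mi x y * Lm y z * f z))).
      2: { apply sm_ext. intros y Hy. rewrite HLm by auto. rewrite <- sm_scal. apply sm_ext. intros; ring. }
      rewrite sm_swap.
      transitivity (sm N (fun z => (if Nat.eqb z x then f x else 0))).
      { rewrite sm_single; auto. }
      apply sm_ext. intros z Hz. rewrite sm_scal_r.
      pose proof (HMi x z Hx Hz) as E. change (sm N (fun y => Mi x y * Lm y z) = if Nat.eqb x z then 1 else 0) in E.
      rewrite E. destruct (Nat.eqb_spec z x), (Nat.eqb_spec x z); subst; try lia; ring. }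
    assert (Hbd : nrm N f <= K * nrm N (L f)).
    { unfold K. rewrite <- sm_scal_r. unfold nrm at 1. apply sm_le. intros x Hx.
      rewrite Hrep by auto. apply sm_CS. }
    assert (K * nrm N (L f) <= K * (eps * mu * nrm N f)) by (apply Rmult_le_compat_l; auto).
    assert (Hke : K * (eps * mu * nrm N f) = (K * mu) / (2 * (K * mu + 1)) * nrm N f) by (unfold eps; field; lra).
    assert (Hc : (K * mu) / (2 * (K * mu + 1)) <= 1 / 2).
    { apply div_le_iff; lra. }
    assert (nrm N f <= 1 / 2 * nrm N f).
    { apply Rle_trans with (K * nrm N (L f)); auto. rewrite Hke in H.
      apply Rle_trans with ((K * mu) / (2 * (K * mu + 1)) * nrm N f); auto.
      apply Rmult_le_compat_r; auto. lra. }
    lra.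
Qed.

End Contr.


Import ListNotations.
Open Scope R_scope.

Fixpoint Pt (N : nat) (a : nat -> nat -> bool) (t : nat) (f : nat -> R) : nat -> R :=
  match t with O => f | S t => Pop N a (Pt N a t f) end.

Lemma geom_sum (r : R) T : sm T (fun t => r ^ t) * (1 - r) = 1 - r ^ T.
Proof. induction T; simpl; [ring|]. rewrite Rmult_plus_distr_r, IHT. ring. Qed.

Section Green.
Variable N : nat.
Variable a : nat -> nat -> bool.
Hypothesis Hreg : simple_3_regular N a.
Variable rho : R.
Hypothesis Hrho0 : 0 < rho.
Hypothesis Hrho1 : rho < 1.
Hypothesis Hcontr : forall f, sm N f = 0 -> nrm N (Pop N a f) <= rho ^ 2 * nrm N f.
Variable v : nat.
Hypothesis Hv : (v < N)%nat.

Let e x := if Nat.eqb x v then INR N - 1 else -1.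

Lemma e_sum : sm N e = 0.
Proof.
  unfold e. rewrite (sm_ext _ _ (fun x => (if Nat.eqb x v then INR N else 0) - 1)).
  - rewrite sm_minus, sm_single, sm_const by auto. ring.
  - intros x _. destruct (Nat.eqb x v); ring.
Qed.

Lemma e_nrm : nrm N e <= INR N * INR N.
Proof.
  unfold nrm, e. rewrite (sm_ext _ _ (fun x => (if Nat.eqb x v then (INR N - 1) * (INR N - 1) - 1 else 0) + 1)).
  - rewrite sm_plus, sm_single, sm_const by auto.
    assert (1 <= INR N) by (apply (le_INR 1); lia). nra.
  - intros x _. destruct (Nat.eqb x v); ring.
Qed.

Lemma Pt_sum t : sm N (Pt N a t e) = 0.
Proof. induction t; simpl; [apply e_sum|]. rewrite Pop_sum; auto. Qed.

Lemma Pt_nrm t : nrm N (Pt N a t e) <= rho ^ (2 * t) * (INR N * INR N).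
Proof.
  induction t.
  - simpl. rewrite Rmult_1_l. apply e_nrm.
  - simpl Pt. apply Rle_trans with (rho ^ 2 * nrm N (Pt N a t e)).
    + apply Hcontr, Pt_sum.
    + replace (2 * S t)%nat with (2 + 2 * t)%nat by lia. rewrite pow_add, Rmult_assoc.
      apply Rmult_le_compat_l; auto. apply pow_le; lra.
Qed.

Lemma Pt_bound t x : (x < N)%nat -> Rabs (Pt N a t e x) <= rho ^ t * INR N.
Proof.
  intros Hx.
  assert (H : Rsqr (Pt N a t e x) <= Rsqr (rho ^ t * INR N)).
  { unfold Rsqr. apply Rle_trans with (nrm N (Pt N a t e)).
    - unfold nrm. apply (sm_term_le N (fun y => Pt N a t e y * Pt N a t e y)); auto.
      intros y _. pose proof (Rle_0_sqr (Pt N a t e y)). unfold Rsqr in *. lra.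
    - eapply Rle_trans; [apply Pt_nrm|]. replace (rho ^ (2 * t)) with (rho ^ t * rho ^ t) by (rewrite <- pow_add; f_equal; lia). right; ring. }
  apply Rsqr_le_abs_0 in H. rewrite (Rabs_right (rho ^ t * INR N)) in H; auto.
  apply Rle_ge, Rmult_le_pos; [apply pow_le; lra|apply pos_INR].
Qed.

Definition G0 T x := sm T (fun t => Pt N a t e x).

Lemma G0_harm T x : G0 T x - Pop N a (G0 T) x = e x - Pt N a T e x.
Proof.
  assert (E : Pop N a (G0 T) x = sm T (fun t => Pt N a (S t) e x)).
  { unfold G0, Pop. simpl Pt. unfold Pop.
    transitivity (sm N (fun y => sm T (fun t => trans3 a x y * Pt N a t e y))).
    { apply sm_ext. intros; rewrite sm_scal; reflexivity. }
    rewrite sm_swap. reflexivity. }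
  rewrite E. unfold G0. rewrite <- sm_minus. rewrite (sm_telescope T (fun t => Pt N a t e x)). reflexivity.
Qed.

Lemma G0_bound T x : (x < N)%nat -> Rabs (G0 T x) <= INR N / (1 - rho).
Proof.
  intros Hx. unfold G0.
  apply Rle_trans with (sm T (fun t => rho ^ t * INR N)).
  - induction T; simpl.
    { replace R0 with 0 by reflexivity. rewrite Rabs_R0. lra. }
    eapply Rle_trans; [apply Rabs_triang|]. apply Rplus_le_compat; auto. apply Pt_bound; auto.
  - rewrite sm_scal_r. pose proof (geom_sum rho T).
    assert (0 <= rho ^ T) by (apply pow_le; lra).
    assert (sm T (fun t => rho ^ t) <= / (1 - rho)).
    { apply Rmult_le_reg_r with (1 - rho); [lra|]. rewrite H, Rinv_l; lra. }
    unfold Rdiv. rewrite Rmult_comm. apply Rmult_le_compat_l; [apply pos_INR|auto].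
Qed.

Lemma green_exists : exists G : nat -> R,
  (forall x, (x < N)%nat -> 0 <= G x <= 2 * INR N / (1 - rho)) /\
  (forall x, (x < N)%nat -> x <> v -> - (3 / 2) <= G x - Pop N a G x) /\
  INR N - 3 / 2 <= G v - Pop N a G v.
Proof.
  assert (HN : 0 < INR N) by (apply lt_0_INR; lia).
  destruct (pow_lt_1_zero rho) with (y := / (2 * INR N)) as [T0 HT0].
  { rewrite Rabs_right; lra. }
  { apply Rinv_0_lt_compat; lra. }
  specialize (HT0 T0 (le_n _)). rewrite Rabs_right in HT0 by (apply Rle_ge, pow_le; lra).
  assert (HT : rho ^ T0 * INR N < 1 / 2).
  { apply Rmult_lt_compat_r with (r := INR N) in HT0; auto.
    replace (/ (2 * INR N) * INR N) with (1/2) in HT0 by (field; lra). lra. }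
  set (c := INR N / (1 - rho)).
  assert (Hc : 0 <= c) by (unfold c; apply Rmult_le_pos; [lra|apply Rlt_le, Rinv_0_lt_compat; lra]).
  exists (fun x => G0 T0 x + c).
  assert (HP : forall x, (x < N)%nat -> Pop N a (fun y => G0 T0 y + c) x = Pop N a (G0 T0) x + c).
  { intros x Hx. rewrite (Pop_ext N a _ (fun y => G0 T0 y + c * 1)) by (intros; ring).
    rewrite Pop_lin, Pop_const by auto. ring. }
  assert (Hh : forall x, (x < N)%nat -> Rabs (G0 T0 x - Pop N a (G0 T0) x - e x) < 1 / 2).
  { intros x Hx. rewrite G0_harm. replace (e x - Pt N a T0 e x - e x) with (- Pt N a T0 e x) by ring.
    rewrite Rabs_Ropp. eapply Rle_lt_trans; [apply Pt_bound; auto|]. auto. }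
  split; [|split].
  - intros x Hx. pose proof (G0_bound T0 x Hx). fold c in H. assert (Hab : - c <= G0 T0 x <= c) by (split; [pose proof (Rabs_pos (G0 T0 x)); pose proof (Rabs_Ropp (G0 T0 x)); pose proof (Rle_abs (- G0 T0 x)); lra | pose proof (Rle_abs (G0 T0 x)); lra]).
    assert (2 * INR N / (1 - rho) = 2 * c) by (unfold c; field; lra). lra.
  - intros x Hx Hxv. rewrite HP by auto. pose proof (Hh x Hx). unfold e in H.
    destruct (Nat.eqb_spec x v); [contradiction|]. apply Rabs_def2 in H. lra.
  - rewrite HP by auto. pose proof (Hh v Hv). unfold e in H. rewrite Nat.eqb_refl in H.
    apply Rabs_def2 in H. lra.
Qed.

End Green.


Import ListNotations.
Open Scope R_scope.

Lemma super (nb : Vtx -> list Vtx) (good : Vtx -> Prop) (psi : Vtx -> R) (E a : R) :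
  1 <= E -> 1 <= a ->
  (forall x, good x -> 1 <= psi x) ->
  (forall x w, good x -> In w (nb x) -> good w) ->
  (forall x, good x -> sumR (map (fun w => / INR (length (nb x)) * ((if is_origin w then a else 1) * psi w)) (nb x)) <= E * psi x) ->
  forall t x m, good x -> visits_prob nb t x m <= E ^ t * (/ a) ^ m * psi x.
Proof.
  intros HE Ha Hpsi Hcl Hcond.
  assert (HEt : forall t, 1 <= E ^ t) by (intros; apply pow_R1_Rle; auto).
  assert (Hia : 0 < / a) by (apply Rinv_0_lt_compat; lra).
  assert (Hiam : forall m, 0 < (/ a) ^ m) by (intros; apply pow_lt; auto).
  induction t; intros x m Hx; destruct m.
  - simpl. pose proof (Hpsi x Hx). lra.
  - simpl. pose proof (Hpsi x Hx). pose proof (Hiam (S m)). simpl in H0. nra.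
  - simpl visits_prob. pose proof (Hpsi x Hx). pose proof (HEt (S t)). simpl (_ ^ 0). nra.
  - simpl visits_prob.
    set (l := nb x).
    apply Rle_trans with (sumR (map (fun w => (E ^ t * (/ a) ^ (S m)) * (/ INR (length l) * ((if is_origin w then a else 1) * psi w))) l)).
    + apply sumR_le. intros w Hw.
      assert (Hgw : good w) by (apply (Hcl x); auto).
      assert (Hl : 0 <= / INR (length l)).
      { destruct l; [simpl in Hw; contradiction|]. apply Rlt_le, Rinv_0_lt_compat, lt_0_INR. simpl; lia. }
      destruct (is_origin w).
      * pose proof (IHt w m Hgw).
        assert (Hid : E ^ t * (/ a) ^ S m * (/ INR (length l) * (a * psi w)) =
          / INR (length l) * (E ^ t * (/ a) ^ m * psi w) * (/ a * a)) by (simpl; ring).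
        rewrite Hid, Rinv_l, Rmult_1_r by lra.
        apply Rmult_le_compat_l; auto.
      * pose proof (IHt w (S m) Hgw).
        replace (E ^ t * (/ a) ^ S m * (/ INR (length l) * (1 * psi w))) with
          (/ INR (length l) * (E ^ t * (/ a) ^ S m * psi w)) by ring.
        apply Rmult_le_compat_l; auto.
    + rewrite sumR_scal. pose proof (Hcond x Hx). fold l in H.
      replace (E ^ S t * (/ a) ^ S m * psi x) with (E ^ t * (/ a) ^ S m * (E * psi x)) by (simpl; ring).
      apply Rmult_le_compat_l; auto. apply Rmult_le_pos; [pose proof (HEt t); lra|apply Rlt_le; auto].
Qed.


Import ListNotations.
Open Scope R_scope.

Lemma avg_le (l : list Vtx) (g : Vtx -> R) c : 0 <= c ->
  sumR (map g l) <= INR (length l) * c ->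
  sumR (map (fun w => / INR (length l) * g w) l) <= c.
Proof.
  intros Hc H. rewrite sumR_scal. destruct l as [|w l].
  - simpl. rewrite Rinv_0. lra.
  - assert (HL : 0 < INR (length (w :: l))) by (apply lt_0_INR; simpl; lia).
    apply Rmult_le_reg_l with (INR (length (w :: l))); auto.
    rewrite <- Rmult_assoc, Rinv_r, Rmult_1_l by lra. auto.
Qed.

Lemma is_origin_pos k : (1 <= k)%nat -> is_origin (inl k) = false.
Proof. intros H. destruct k; [lia|reflexivity]. Qed.

Section HSeq.
Variable h : nat -> nat.
Hypothesis Hh0 : (0 < h 0)%nat.
Hypothesis Hhinc : forall i, (h i < h (S i))%nat.

Lemma h_lt i1 i2 : (i1 < i2)%nat -> (h i1 < h i2)%nat.
Proof.
  intros H. induction H.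
  - apply Hhinc.
  - pose proof (Hhinc m). lia.
Qed.

Lemma h_inj i1 i2 : h i1 = h i2 -> i1 = i2.
Proof.
  intros E. destruct (Nat.lt_trichotomy i1 i2) as [H|[H|H]]; auto.
  - pose proof (h_lt _ _ H). lia.
  - pose proof (h_lt _ _ H). lia.
Qed.

Lemma h_ge i : (i < h i)%nat.
Proof. induction i; auto. pose proof (Hhinc i). lia. Qed.
End HSeq.

Section Graph.
Variables (h n v : nat -> nat) (adj : nat -> nat -> nat -> bool).
Hypothesis Hh0 : (0 < h 0)%nat.
Hypothesis Hhinc : forall i, (h i < h (S i))%nat.
Hypothesis Hreg : forall i, (1 <= i)%nat -> simple_3_regular (n i) (adj i).
Hypothesis Hv : forall i, (1 <= i)%nat -> (v i < n i)%nat.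
Variable i : nat.
Hypothesis Hi : (1 <= i)%nat.
Hypothesis HH4 : (4 <= h i)%nat.
Hypothesis HN3 : (3 <= n i)%nat.
Variable G : nat -> R.
Hypothesis HG0 : forall y, (y < n i)%nat -> 0 <= G y.
Hypothesis HG1 : forall y, (y < n i)%nat -> y <> v i -> - (3 / 2) <= G y - Pop (n i) (adj i) G y.
Hypothesis HG2 : INR (n i) - 3 / 2 <= G (v i) - Pop (n i) (adj i) G (v i).
Hypothesis HGv : 4 / (INR (h i) * INR (n i)) * G (v i) <= 1.

Let Hr := INR (h i).
Let Nr := INR (n i).
Let lam := 4 / (Hr * Nr).
Let w0 := Hr / (2 * (Hr + 2)).
Let A := w0 / (1 + lam * G (v i) / 2).
Let B := lam * A / 2.
Let W y := A + B * G y.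

Lemma Hr4 : 4 <= Hr.
Proof. unfold Hr. assert (H : INR 4 <= INR (h i)) by (apply le_INR; auto). simpl in H. lra. Qed.
Lemma Nr3 : 3 <= Nr.
Proof. unfold Nr. assert (H : INR 3 <= INR (n i)) by (apply le_INR; auto). simpl in H. lra. Qed.
Lemma lam_pos : 0 < lam.
Proof. pose proof Hr4; pose proof Nr3. unfold lam. apply Rdiv_lt_0_compat; [lra|nra]. Qed.
Lemma Gv0 : 0 <= G (v i).
Proof. apply HG0, Hv, Hi. Qed.
Lemma A_pos : 0 < A.
Proof.
  pose proof Hr4; pose proof lam_pos; pose proof Gv0. unfold A, w0.
  apply Rdiv_lt_0_compat; [apply Rdiv_lt_0_compat; lra|]. nra.
Qed.
Lemma B_nonneg : 0 <= B.
Proof. pose proof A_pos; pose proof lam_pos. unfold B. nra. Qed.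
Lemma W_nonneg y : (y < n i)%nat -> 0 <= W y.
Proof. intros. pose proof A_pos; pose proof B_nonneg; pose proof (HG0 y H). unfold W. nra. Qed.
Lemma W_v : W (v i) = w0.
Proof.
  pose proof lam_pos; pose proof Gv0. unfold W, B, A. field. nra.
Qed.

Lemma PopW y : (y < n i)%nat -> Pop (n i) (adj i) W y = A + B * Pop (n i) (adj i) G y.
Proof.
  intros Hy. unfold W. rewrite (Pop_lin (n i) (adj i) (fun _ => A) G B y).
  rewrite Pop_const; auto.
Qed.

Lemma T1 y : (y < n i)%nat -> y <> v i -> Pop (n i) (adj i) W y <= (1 + lam) * W y.
Proof.
  intros Hy Hyv. rewrite PopW by auto. pose proof (HG1 y Hy Hyv).
  pose proof A_pos; pose proof B_nonneg; pose proof lam_pos; pose proof (HG0 y Hy).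
  unfold W. assert (B * (3 / 2) <= lam * A) by (unfold B; nra).
  assert (B * Pop (n i) (adj i) G y <= B * (G y + 3/2)) by (apply Rmult_le_compat_l; lra).
  assert (0 <= lam * (B * G y)) by (apply Rmult_le_pos; [lra|apply Rmult_le_pos; lra]).
  lra.
Qed.

Lemma T2 : 3 * Pop (n i) (adj i) W (v i) + 1 / 2 <= 4 * ((1 + lam) * W (v i)).
Proof.
  assert (Hvi : (v i < n i)%nat) by auto.
  rewrite PopW by auto. pose proof HG2.
  pose proof A_pos; pose proof B_nonneg; pose proof lam_pos; pose proof Gv0; pose proof Hr4; pose proof Nr3.
  assert (Hw : W (v i) = w0) by apply W_v.
  assert (Key : 1 / 2 <= W (v i) + 3 * B * (Nr - 3 / 2)).
  { rewrite Hw.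
    assert (HB : B = lam * w0 / (2 + lam * G (v i))) by (unfold B, A; field; nra).
    assert (Hlg : lam * G (v i) <= 1) by (unfold lam, Hr, Nr; exact HGv).
    assert (Hw0 : 0 < w0) by (unfold w0; apply Rdiv_lt_0_compat; lra).
    assert (3 * B * (Nr - 3 / 2) >= lam * w0 * (Nr - 3/2)).
    { rewrite HB. apply Rle_ge. unfold Rdiv.
      assert (0 < / (2 + lam * G (v i))) by (apply Rinv_0_lt_compat; nra).
      assert (/ 3 <= / (2 + lam * G (v i))) by (apply Rinv_le_contravar; nra).
      assert (0 <= lam * w0 * (Nr - 3/2)) by (apply Rmult_le_pos; nra).
      nra. }
    assert (lam * Nr = 4 / Hr) by (unfold lam; field; lra).
    assert (w0 * (1 + 2 / Hr) = 1 / 2) by (unfold w0; field; lra).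
    assert (lam * w0 * (Nr - 3 / 2) >= w0 * (2 / Hr)).
    { assert (lam * w0 * (Nr - 3/2) = w0 * (lam * Nr) - 3/2 * lam * w0) by ring.
      assert (lam * Nr / 2 >= 3 / 2 * lam) by nra.
      nra. }
    nra. }
  assert (Key2 : 1 / 2 <= A + B * G (v i) + 3 * (B * Nr) - 9 / 2 * B).
  { assert (E1 : 3 * B * (Nr - 3 / 2) = 3 * (B * Nr) - 9 / 2 * B) by lra.
    assert (E2 : W (v i) = A + B * G (v i)) by reflexivity. lra. }
  assert (HP : B * Pop (n i) (adj i) G (v i) <= B * G (v i) - B * Nr + 3 / 2 * B).
  { replace (B * G (v i) - B * Nr + 3 / 2 * B) with (B * (G (v i) - Nr + 3 / 2)) by ring.
    apply Rmult_le_compat_l; auto. unfold Nr. lra. }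
  assert (0 <= lam * W (v i)) by (apply Rmult_le_pos; [lra|apply W_nonneg; auto]).
  unfold W in *; cbv beta in *. lra.
Qed.

Let s := 1 / (2 * (Hr - 1)).
Let U j := if (j <=? h i)%nat then 1 - INR (j - 1) * s else 1 / 2.
Let psi (x : Vtx) : R :=
  match x with
  | inl j => 1 + U j
  | inr (i', y) => if Nat.eqb i' i then 1 + W y else 1 + U (h i')
  end.
Let good (x : Vtx) : Prop :=
  match x with inl _ => True | inr (i', y) => (1 <= i')%nat /\ (y < n i')%nat end.
Let av := 1 + 1 / (8 * Hr).
Let E := 1 + lam.

Lemma s_pos : 0 < s.
Proof. pose proof Hr4. unfold s. apply Rdiv_lt_0_compat; lra. Qed.

Lemma Hr_minus1 : INR (h i - 1) = Hr - 1.
Proof. unfold Hr. rewrite minus_INR by lia. simpl. ring. Qed.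

Lemma U_le j : (j <= h i)%nat -> U j = 1 - INR (j - 1) * s.
Proof. intros H. unfold U. apply Nat.leb_le in H. rewrite H. reflexivity. Qed.

Lemma U_ge j : (h i <= j)%nat -> U j = 1 / 2.
Proof.
  intros H. unfold U. destruct (Nat.leb_spec j (h i)); [|reflexivity].
  assert (j = h i) by lia. subst j. rewrite Hr_minus1. pose proof Hr4. unfold s. field. lra.
Qed.

Lemma U_bounds j : 1 / 2 <= U j <= 1.
Proof.
  destruct (Nat.le_gt_cases j (h i)) as [H|H].
  - rewrite U_le by auto. pose proof s_pos.
    assert (INR (j - 1) <= Hr - 1) by (rewrite <- Hr_minus1; apply le_INR; lia).
    assert (0 <= INR (j - 1)) by apply pos_INR.
    assert ((Hr - 1) * s = 1 / 2) by (pose proof Hr4; unfold s; field; lra).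
    split; nra.
  - rewrite U_ge by lia. lra.
Qed.

Lemma w0_le : w0 <= 1 / 2 - s.
Proof.
  pose proof Hr4. unfold w0, s.
  assert (Hr / (2 * (Hr + 2)) = 1/2 - 1 / (Hr + 2)) by (field; lra).
  rewrite H0.
  assert (1 / (2 * (Hr - 1)) <= 1 / (Hr + 2)).
  { apply Rmult_le_reg_r with ((2 * (Hr - 1)) * (Hr + 2)). nra.
    replace (1 / (2 * (Hr - 1)) * (2 * (Hr - 1) * (Hr + 2))) with (Hr + 2) by (field; lra).
    replace (1 / (Hr + 2) * (2 * (Hr - 1) * (Hr + 2))) with (2 * (Hr - 1)) by (field; lra). lra. }
  lra.
Qed.

Lemma psi_ge1 x : good x -> 1 <= psi x.
Proof.
  destruct x as [j|[i' y]]; simpl; intros Hg.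
  - pose proof (U_bounds j). lra.
  - destruct (Nat.eqb_spec i' i).
    + subst i'. pose proof (W_nonneg y (proj2 Hg)). lra.
    + pose proof (U_bounds (h i')). lra.
Qed.

Lemma good_closed x w : good x -> In w (nbrs h n v adj x) -> good w.
Proof.
  destruct x as [j|[i' y]]; simpl; intros Hg Hw.
  - apply in_app_or in Hw. destruct Hw as [Hw|Hw].
    + destruct j; simpl in Hw; [contradiction|]. destruct Hw as [<-|[]]. exact I.
    + simpl in Hw. destruct Hw as [<-|Hw]; [exact I|].
      apply in_map_iff in Hw. destruct Hw as [i2 [<- Hi2]].
      apply filter_In in Hi2. destruct Hi2 as [Hi2 _]. apply in_seq in Hi2.
      simpl. split; [lia|]. apply Hv. lia.
  - apply in_app_or in Hw. destruct Hw as [Hw|Hw].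
    + apply in_map_iff in Hw. destruct Hw as [z [<- Hz]].
      apply filter_In in Hz. destruct Hz as [Hz _]. apply in_seq in Hz. simpl. split; [tauto|lia].
    + destruct (Nat.eqb y (v i')); simpl in Hw; [destruct Hw as [<-|[]]; exact I|contradiction].
Qed.

Let g (w : Vtx) := (if is_origin w then av else 1) * psi w.

Lemma E_ge1 : 1 <= E.
Proof. pose proof lam_pos. unfold E. lra. Qed.

Lemma psi_inl j : psi (inl j) = 1 + U j.
Proof. reflexivity. Qed.

Lemma fin_step x c : good x -> sumR (map g (nbrs h n v adj x)) <= INR (length (nbrs h n v adj x)) * c ->
  c <= E * psi x -> sumR (map (fun w => / INR (length (nbrs h n v adj x)) * g w) (nbrs h n v adj x)) <= E * psi x.
Proof.
  intros Hg H1 H2. pose proof (psi_ge1 x Hg). pose proof E_ge1.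
  apply Rle_trans with (Rmax c 0).
  - apply avg_le. apply Rmax_r. eapply Rle_trans; [exact H1|]. apply Rmult_le_compat_l; [apply pos_INR|apply Rmax_l].
  - apply Rmax_lub; auto. nra.
Qed.

Lemma cond_inl0 : sumR (map (fun w => / INR (length (nbrs h n v adj (inl 0%nat))) * g w) (nbrs h n v adj (inl 0%nat))) <= E * psi (inl 0%nat).
Proof.
  apply fin_step with 2; [exact I| |].
  - change (nbrs h n v adj (inl 0%nat)) with [@inl nat (nat * nat) 1%nat]. simpl.
    unfold g. simpl is_origin. rewrite psi_inl, U_le by lia. simpl. lra.
  - rewrite psi_inl, U_le by lia. simpl. pose proof E_ge1. lra.
Qed.

Lemma h1 : (2 <= h 1)%nat.
Proof. pose proof (Hhinc 0). lia. Qed.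

Lemma cond_inl1 : sumR (map (fun w => / INR (length (nbrs h n v adj (inl 1%nat))) * g w) (nbrs h n v adj (inl 1%nat))) <= E * psi (inl 1%nat).
Proof.
  assert (Hn : nbrs h n v adj (inl 1%nat) = [inl 0%nat; inl 2%nat]).
  { simpl. destruct (Nat.eqb_spec (h 1) 1); [pose proof h1; lia|reflexivity]. }
  apply fin_step with 2; [exact I| |].
  - rewrite Hn. simpl. unfold g. simpl is_origin. rewrite !psi_inl, !U_le by lia.
    simpl. unfold av. pose proof Hr4. pose proof s_pos.
    assert (1 / (8 * Hr) <= s / 2) by (unfold s; apply Rmult_le_reg_r with (8 * Hr * (Hr - 1)); [nra|]; field_simplify; nra).
    nra.
  - rewrite psi_inl, U_le by lia. simpl. pose proof E_ge1. lra.
Qed.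

Lemma U_concave j : (1 <= j)%nat -> S j <> h i -> U j + U (S (S j)) <= 2 * U (S j).
Proof.
  intros Hj Hne.
  destruct (Nat.le_gt_cases (S (S j)) (h i)) as [H|H].
  - rewrite !U_le by lia.
    replace (S (S j) - 1)%nat with (S j) by lia. replace (S j - 1)%nat with j by lia.
    rewrite !S_INR. rewrite minus_INR by lia. simpl. lra.
  - rewrite !U_ge by lia. lra.
Qed.

Lemma cond_line j : (1 <= j)%nat ->
  sumR (map (fun w => / INR (length (nbrs h n v adj (inl (S j)))) * g w) (nbrs h n v adj (inl (S j)))) <= E * psi (inl (S j)).
Proof.
  intros Hj.
  set (T := map (fun i0 => (@inr nat (nat * nat) (i0, v i0) : Vtx)) (filter (fun i0 => Nat.eqb (h i0) (S j)) (seq 1 (S j)))).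

  assert (Hn : nbrs h n v adj (inl (S j)) = inl j :: inl (S (S j)) :: T) by reflexivity.
  apply fin_step with (psi (inl (S j))); [exact I| |pose proof E_ge1; pose proof (psi_ge1 (inl (S j)) I); nra].
  rewrite Hn.
  assert (Hg1 : g (inl j) = 1 + U j).
  { unfold g. destruct j; [lia|]. simpl is_origin. rewrite Rmult_1_l. reflexivity. }
  assert (Hg2 : g (inl (S (S j))) = 1 + U (S (S j))).
  { unfold g. simpl is_origin. rewrite Rmult_1_l. reflexivity. }
  change (sumR (map g (inl j :: inl (S (S j)) :: T))) with (g (inl j) + (g (inl (S (S j))) + sumR (map g T))).
  change (length (inl j :: inl (S (S j)) :: T)) with (S (S (length T))).
  rewrite !S_INR, Hg1, Hg2, psi_inl.
  assert (HT : forall w, In w T -> exists i', w = inr (i', v i') /\ h i' = S j /\ (1 <= i')%nat).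
  { intros w Hw. unfold T in Hw. apply in_map_iff in Hw. destruct Hw as [i' [<- Hi']].
    apply filter_In in Hi'. destruct Hi' as [Hs He]. apply in_seq in Hs. apply Nat.eqb_eq in He.
    exists i'. repeat split; auto; lia. }
  destruct (Nat.eq_dec (S j) (h i)) as [Heq|Hne].
  - rewrite (sumR_const _ T g (1 + w0)).
    2: { intros w Hw. destruct (HT w Hw) as [i' [-> [Hh' _]]].
         assert (i' = i) by (apply (h_inj h Hh0 Hhinc); lia). subst i'.
         unfold g. simpl is_origin. simpl psi. rewrite Nat.eqb_refl. rewrite W_v. ring. }
    assert (HTl : (1 <= length T)%nat).
    { assert (In (inr (i, v i)) T).
      { unfold T. apply in_map_iff. exists i. split; [reflexivity|]. apply filter_In. split.
        - apply in_seq. pose proof (h_ge h Hh0 Hhinc i). lia.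
        - apply Nat.eqb_eq. auto. }
      destruct T; [contradiction|simpl; lia]. }
    assert (1 <= INR (length T)) by (apply (le_INR 1); auto).
    rewrite U_le by lia. rewrite U_ge by lia. rewrite U_ge by lia.
    assert (INR (j - 1) = Hr - 2).
    { rewrite minus_INR by lia. unfold Hr. rewrite <- Heq. rewrite (S_INR j). change (INR 1) with 1. lra. }
    rewrite H0.
    assert ((Hr - 1) * s = 1 / 2) by (pose proof Hr4; unfold s; field; lra).
    pose proof w0_le. pose proof s_pos. nra.
  - rewrite (sumR_const _ T g (1 + U (S j))).
    2: { intros w Hw. destruct (HT w Hw) as [i' [-> [Hh' _]]].
         unfold g. simpl is_origin. simpl psi. destruct (Nat.eqb_spec i' i); [subst; lia|]. rewrite Hh'. ring. }
    pose proof (U_concave j Hj Hne). pose proof (pos_INR (length T)). nra.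
Qed.

Lemma sum_trap y : (y < n i)%nat ->
  sumR (map g (map (fun z => (@inr nat (nat * nat) (i, z) : Vtx)) (filter (adj i y) (seq 0 (n i))))) =
  3 * (1 + Pop (n i) (adj i) W y).
Proof.
  intros Hy. rewrite map_map.
  rewrite (map_ext _ (fun z => 1 + W z)).
  2: { intros z. unfold g. simpl is_origin. simpl psi. rewrite Nat.eqb_refl. lra. }
  rewrite sumR_filter, sumR_seq.
  replace (3 * (1 + Pop (n i) (adj i) W y)) with (3 * (sm (n i) (fun z => trans3 (adj i) y z) + Pop (n i) (adj i) W y))
    by (rewrite row_sum; auto).
  unfold Pop. rewrite <- sm_plus, <- sm_scal. apply sm_ext. intros z _.
  unfold trans3. destruct (adj i y z); field.
Qed.

Lemma len_trap y : (y < n i)%nat -> length (filter (adj i y) (seq 0 (n i))) = 3%nat.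
Proof. intros Hy. destruct (Hreg i Hi) as [_ [_ H3]]. apply H3; auto. Qed.

Lemma cond_trap_i y : (y < n i)%nat ->
  sumR (map (fun w => / INR (length (nbrs h n v adj (inr (i, y)))) * g w) (nbrs h n v adj (inr (i, y)))) <= E * psi (inr (i, y)).
Proof.
  intros Hy.
  set (F := filter (adj i y) (seq 0 (n i))).
  assert (Hn : nbrs h n v adj (inr (i, y)) = map (fun z => (@inr nat (nat * nat) (i, z) : Vtx)) F ++ (if Nat.eqb y (v i) then [inl (h i)] else [])) by reflexivity.
  assert (Hpsi : psi (inr (i, y)) = 1 + W y) by (simpl psi; rewrite Nat.eqb_refl; reflexivity).
  pose proof E_ge1. pose proof (W_nonneg y Hy).
  apply fin_step with (E * psi (inr (i, y))); [simpl; auto| |lra].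
  rewrite Hn, map_app, sumR_app, app_length, map_length. unfold F. rewrite sum_trap, len_trap by auto.
  rewrite Hpsi.
  destruct (Nat.eqb_spec y (v i)) as [Hyv|Hyv].
  - subst y. simpl.
    assert (Hgh : g (inl (h i)) = 3 / 2).
    { unfold g. pose proof (h_ge h Hh0 Hhinc i). rewrite is_origin_pos by lia.
      rewrite psi_inl, U_ge by lia. lra. }
    rewrite Hgh. pose proof T2. unfold E in *. nra.
  - simpl. pose proof (T1 y Hy Hyv). unfold E in *. nra.
Qed.

Lemma cond_trap_other i' y : (1 <= i')%nat -> i' <> i -> (y < n i')%nat ->
  sumR (map (fun w => / INR (length (nbrs h n v adj (inr (i', y)))) * g w) (nbrs h n v adj (inr (i', y)))) <= E * psi (inr (i', y)).
Proof.
  intros Hi' Hne Hy.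
  assert (Hpsi' : forall z, psi (inr (i', z)) = 1 + U (h i')).
  { intros z. simpl psi. destruct (Nat.eqb_spec i' i); [contradiction|reflexivity]. }
  assert (Hpsi := Hpsi' y).
  pose proof E_ge1. pose proof (U_bounds (h i')).
  apply fin_step with (1 + U (h i')); [simpl; auto| |rewrite Hpsi; nra].
  right. apply sumR_const. intros w Hw. simpl in Hw. apply in_app_or in Hw. destruct Hw as [Hw|Hw].
  - apply in_map_iff in Hw. destruct Hw as [z [<- _]]. unfold g. simpl is_origin. rewrite Rmult_1_l. exact (Hpsi' z).
  - destruct (Nat.eqb y (v i')); simpl in Hw; [|contradiction]. destruct Hw as [<-|[]].
    unfold g. pose proof (h_ge h Hh0 Hhinc i'). rewrite is_origin_pos by lia.
    rewrite Rmult_1_l. rewrite psi_inl. reflexivity.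
Qed.

Lemma cond_all x : good x ->
  sumR (map (fun w => / INR (length (nbrs h n v adj x)) * g w) (nbrs h n v adj x)) <= E * psi x.
Proof.
  destruct x as [j|[i' y]]; intros Hg.
  - destruct j as [|[|j]].
    + apply cond_inl0.
    + apply cond_inl1.
    + apply cond_line. lia.
  - destruct Hg as [Hi' Hy]. destruct (Nat.eq_dec i' i).
    + subst. apply cond_trap_i; auto.
    + apply cond_trap_other; auto.
Qed.

Lemma main_bound t m : visits_prob (nbrs h n v adj) t (inl 0%nat) m <= E ^ t * (/ av) ^ m * 2.
Proof.
  replace 2 with (psi (inl 0%nat)).
  2: { rewrite psi_inl, U_le by lia. simpl. lra. }
  apply (super (nbrs h n v adj) good psi E av).
  - apply E_ge1.
  - unfold av. pose proof Hr4. assert (0 < 1 / (8 * Hr)) by (apply Rdiv_lt_0_compat; lra). lra.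
  - apply psi_ge1.
  - apply good_closed.
  - apply cond_all.
  - exact I.
Qed.

End Graph.


Import ListNotations.
Open Scope R_scope.

Lemma exp_INR a k : exp (a * INR k) = exp a ^ k.
Proof.
  induction k; simpl pow.
  - simpl. rewrite Rmult_0_r, exp_0. reflexivity.
  - rewrite S_INR, Rmult_plus_distr_l, Rmult_1_r, exp_plus, IHk. ring.
Qed.

Lemma exp_le_exp x y : x <= y -> exp x <= exp y.
Proof. intros H. destruct (Rle_lt_or_eq_dec _ _ H) as [H'|H']; [left; apply exp_increasing; auto|right; subst; auto]. Qed.

Lemma bernoulli x n : 0 <= x -> 1 + INR n * x <= (1 + x) ^ n.
Proof.
  intros Hx. induction n; simpl pow.
  - simpl. lra.
  - rewrite S_INR. assert (0 <= INR n * x) by (apply Rmult_le_pos; [apply pos_INR|auto]).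
    assert (1 <= (1 + x) ^ n) by (apply pow_R1_Rle; lra). nra.
Qed.

Lemma pow_exp_le x n : 0 <= x -> (1 + x) ^ n <= exp (x * INR n).
Proof.
  intros Hx. rewrite exp_INR. apply pow_incr. split; [lra|]. apply exp_ineq1_le.
Qed.

Lemma Rceil_ge x : 0 <= x -> x <= INR (Z.to_nat (Rceil x)).
Proof.
  intros Hx. unfold Rceil.
  destruct (base_Int_part (- x)) as [H1 H2].
  assert (Hz : x <= IZR (- Int_part (- x))) by (rewrite opp_IZR; lra).
  assert (Hz0 : (0 <= - Int_part (- x))%Z) by (apply le_IZR; lra).
  rewrite INR_IZR_INZ, Z2Nat.id by auto. auto.
Qed.

Theorem proposition4p5 (rho : R) (Hrho : rho < 1) :
  exists (F : nat -> nat) (C c : R), 0 < C /\ 0 < c /\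
  forall (h n v : nat -> nat) (adj : nat -> nat -> nat -> bool),
    (* increasing sequences of positive integers *)
    (0 < h 0)%nat -> (0 < n 0)%nat ->
    (forall i, (h i < h (S i))%nat) -> (forall i, (n i < n (S i))%nat) ->
    (* n_i = h_i^15 *)
    (forall i, n i = (h i ^ 15)%nat) ->
    (* E_i: 3-regular graphs on n_i vertices with spectral bound rho, v_i in E_i *)
    (forall i, (1 <= i)%nat -> simple_3_regular (n i) (adj i)) ->
    (forall i, (1 <= i)%nat -> spectral_bound rho (n i) (adj i)) ->
    (forall i, (1 <= i)%nat -> (v i < n i)%nat) ->
    (* growth condition *)
    (forall i, (1 <= i)%nat -> (h i >= F (n (i - 1) * h (i - 1) ^ 2))%nat) ->
    forall i k : nat, (1 <= i)%nat -> (1 <= k)%nat ->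
      return_before (nbrs h n v adj)
        (Z.to_nat (Rceil (C * INR k * INR (h i)))) (k * h i * n i)
      <= C * exp (- c * INR k).
Proof.
  set (r := Rmax rho (1 / 2)).
  assert (Hr0 : 1 / 2 <= r) by apply Rmax_r.
  assert (Hr1 : r < 1) by (unfold r; apply Rmax_lub_lt; lra).
  destruct (archimed (8 / (1 - r))) as [Hup _].
  set (H0 := Nat.max (Z.to_nat (up (8 / (1 - r)))) 4).
  assert (HH0 : 8 / (1 - r) <= INR H0).
  { assert (0 < 8 / (1 - r)) by (apply Rdiv_lt_0_compat; lra).
    assert (Hz : (0 <= up (8 / (1 - r)))%Z) by (apply le_IZR; lra).
    apply Rle_trans with (INR (Z.to_nat (up (8 / (1 - r))))).
    - rewrite INR_IZR_INZ, Z2Nat.id by auto. lra.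
    - apply le_INR. unfold H0. lia. }
  exists (fun _ => H0), 64, 1. split; [lra|]. split; [lra|].
  intros h n v adj Hh0 Hn0 Hhinc Hninc Hnh Hreg Hspec Hv HF i k Hi Hk.
  assert (HhH : (H0 <= h i)%nat) by (apply HF; auto).
  assert (Hh4 : (4 <= h i)%nat) by (unfold H0 in HhH; lia).
  assert (HnN : (h i <= n i)%nat).
  { rewrite Hnh. rewrite <- (Nat.pow_1_r (h i)) at 1. apply Nat.pow_le_mono_r; lia. }
  assert (Hn3 : (3 <= n i)%nat) by lia.
  assert (Hrpos : 0 < r) by lra.
  assert (Hspec' : spectral_bound r (n i) (adj i)).
  { intros lam f Hef. destruct (Hspec i Hi lam f Hef) as [Hs1 Hs2]. split; auto.
    intros Hl. apply Rle_trans with rho; [auto|apply Rmax_l]. }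
  pose proof (contraction_sq (n i) (adj i) (Hreg i Hi) r Hrpos Hspec') as Hc.
  destruct (green_exists (n i) (adj i) (Hreg i Hi) r Hrpos Hr1 Hc (v i) (Hv i Hi)) as [G [HG0 [HG1 HG2]]].
  set (hr := INR (h i)). set (Nr := INR (n i)).
  assert (Hhr : 8 / (1 - r) <= hr) by (apply Rle_trans with (INR H0); auto; apply le_INR; auto).
  assert (Hhr4 : 4 <= hr) by (unfold hr; assert (INR 4 <= INR (h i)) by (apply le_INR; auto); simpl in H; lra).
  assert (HNr : 3 <= Nr) by (unfold Nr; assert (INR 3 <= INR (n i)) by (apply le_INR; auto); simpl in H; lra).
  assert (HGv : 4 / (hr * Nr) * G (v i) <= 1).
  { destruct (HG0 (v i) (Hv i Hi)) as [Ga Gb]. fold Nr in Gb.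
    apply Rle_trans with (4 / (hr * Nr) * (2 * Nr / (1 - r))).
    - apply Rmult_le_compat_l; auto. apply Rlt_le, Rdiv_lt_0_compat; nra.
    - replace (4 / (hr * Nr) * (2 * Nr / (1 - r))) with ((8 / (1 - r)) / hr) by (field; split; lra).
      apply div_le_iff; lra. }
  pose proof (main_bound h n v adj Hh0 Hhinc Hreg Hv i Hi Hh4 Hn3 G (fun y Hy => proj1 (HG0 y Hy)) HG1 HG2 HGv) as MB.
  unfold return_before. eapply Rle_trans; [apply MB|]. fold hr Nr.
  set (M := Z.to_nat (Rceil (64 * INR k * hr))).
  set (T := (k * h i * n i)%nat).
  set (lam := 4 / (hr * Nr)).
  set (av := 1 + 1 / (8 * hr)).
  assert (Hkr : 1 <= INR k) by (apply (le_INR 1); auto).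
  assert (Hlam : 0 <= lam) by (unfold lam; apply Rlt_le, Rdiv_lt_0_compat; nra).
  assert (HE : (1 + lam) ^ (T - 1) <= exp (4 * INR k)).
  { eapply Rle_trans; [apply pow_exp_le; auto|]. apply exp_le_exp.
    assert (INR (T - 1) <= INR k * hr * Nr).
    { unfold hr, Nr. rewrite <- !mult_INR. apply le_INR. unfold T. lia. }
    apply Rle_trans with (lam * (INR k * hr * Nr)). apply Rmult_le_compat_l; auto.
    unfold lam. right. field. split; lra. }
  assert (HM : (64 * k * h i <= M)%nat).
  { apply INR_le. rewrite !mult_INR. fold hr. unfold M.
    replace (INR 64) with 64 by (simpl; ring).
    apply Rceil_ge. nra. }
  assert (Hav1 : 1 <= av) by (unfold av; assert (0 < 1 / (8 * hr)) by (apply Rdiv_lt_0_compat; lra); lra).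
  assert (Hav8 : 2 <= av ^ (8 * h i)).
  { unfold av. eapply Rle_trans; [|apply bernoulli; apply Rlt_le, Rdiv_lt_0_compat; lra].
    rewrite mult_INR. fold hr. replace (INR 8) with 8 by (simpl; ring). right. field. lra. }
  assert (HavM : 2 ^ (8 * k) <= av ^ M).
  { apply Rle_trans with (av ^ (64 * k * h i)); [|apply Rle_pow; auto].
    replace (64 * k * h i)%nat with ((8 * h i) * (8 * k))%nat by lia.
    rewrite (pow_mult av). apply pow_incr. lra. }
  assert (H2k : 0 < 2 ^ (8 * k)) by (apply pow_lt; lra).
  assert (HinvM : (/ av) ^ M <= / 2 ^ (8 * k)).
  { rewrite pow_inv. apply Rinv_le_contravar; auto. }
  assert (He5 : exp 5 <= 256).
  { replace 5 with (1 * INR 5) by (simpl; ring). rewrite exp_INR.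
    apply Rle_trans with (3 ^ 5). apply pow_incr. split; [apply Rlt_le, exp_pos|apply exp_le_3]. simpl; lra. }
  assert (H256 : 2 ^ (8 * k) = 256 ^ k) by (rewrite pow_mult; f_equal; simpl; ring).
  assert (Hek : exp (5 * INR k) <= 2 ^ (8 * k)).
  { rewrite exp_INR, H256. apply pow_incr. split; [apply Rlt_le, exp_pos|auto]. }
  assert (Hsplit : exp (4 * INR k) = exp (5 * INR k) * exp (- 1 * INR k)) by (rewrite <- exp_plus; f_equal; ring).
  assert (Hpe : 0 < exp (- 1 * INR k)) by apply exp_pos.
  assert (Hp1 : 0 <= (1 + lam) ^ (T - 1)) by (apply pow_le; lra).
  assert (Hp2 : 0 <= (/ av) ^ M) by (apply pow_le; apply Rlt_le, Rinv_0_lt_compat; lra).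
  apply Rle_trans with (exp (4 * INR k) * / 2 ^ (8 * k) * 2).
  { apply Rmult_le_compat_r; [lra|]. apply Rmult_le_compat; auto. }
  rewrite Hsplit.
  assert (exp (5 * INR k) * / 2 ^ (8 * k) <= 1).
  { apply Rmult_le_reg_r with (2 ^ (8 * k)); auto. rewrite Rmult_assoc, Rinv_l, Rmult_1_r, Rmult_1_l by lra. auto. }
  assert (0 <= exp (5 * INR k) * / 2 ^ (8 * k)) by (apply Rmult_le_pos; [apply Rlt_le, exp_pos|apply Rlt_le, Rinv_0_lt_compat; auto]).
  replace (- (1) * INR k) with (-1 * INR k) by lra.
  set (X := exp (5 * INR k) * / 2 ^ (8 * k)) in *.
  set (Y := exp (-1 * INR k)) in *.
  replace (exp (5 * INR k) * Y * / 2 ^ (8 * k) * 2) with (X * (2 * Y)) by (unfold X; lra).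
  nra.
Qed.
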